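(* Let $n\ge 1$ and let $\mathbf{P}_A,\mathbf{P}_B,\mathbf{Q}_A,\mathbf{Q}_B\in\mathbb{R}^{n\times n}$ be symmetric positive definite; put $\mathbf{C}_A=\mathbf{P}_A+\mathbf{Q}_A$, $\mathbf{C}_B=\mathbf{P}_B+\mathbf{Q}_B$. Let $J$ be an increasing cost function and let $\omega^*\in\arg\min_{\omega\in[0,1]}J(\mathbf{B}_{\mathrm{SCI}}(\omega))$, $\bar\omega^*=1-\omega^*$. Then the triple $\mathbf{K}_A^*=\omega^*\mathbf{B}_{\mathrm{SCI}}(\omega^* )(\mathbf{P}_A+\omega^*\mathbf{Q}_A)^{-1}$, $\mathbf{K}_B^*=\bar\omega^*\mathbf{B}_{\mathrm{SCI}}(\omega^* )(\mathbf{P}_B+\bar\omega^*\mathbf{Q}_B)^{-1}$, $\mathbf{B}_F^*=\mathbf{B}_{\mathrm{SCI}}(\omega^* )$ is a solution of the problem: minimize $J(\mathbf{B}_F)$ over all pairs $(\mathbf{K},\mathbf{B}_F)$ defining a conservative fusion.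
   Context: $\mathcal{A}_{\mathrm{Split}}=\{\mathbf{M}\in\mathbb{R}^{n\times n} : \begin{bmatrix}\mathbf{P}_A & \mathbf{M}\\ \mathbf{M}^\intercal & \mathbf{P}_B\end{bmatrix}\succeq 0\}$. For $\mathbf{K}=(\mathbf{K}_A,\mathbf{K}_B)$ and $\mathbf{P}_{AB}\in\mathcal{A}_{\mathrm{Split}}$, $\mathbf{C}_F(\mathbf{K},\mathbf{P}_{AB})=\mathbf{K}_A\mathbf{C}_A\mathbf{K}_A^\intercal+\mathbf{K}_A\mathbf{P}_{AB}\mathbf{K}_B^\intercal+\mathbf{K}_B\mathbf{P}_{AB}^\intercal\mathbf{K}_A^\intercal+\mathbf{K}_B\mathbf{C}_B\mathbf{K}_B^\intercal$. A pair $(\mathbf{K},\mathbf{B}_F)$ ($\mathbf{B}_F$ symmetric) defines a conservative fusion if $\mathbf{K}_A+\mathbf{K}_B=\mathbf{I}$ and $\mathbf{B}_F\succeq\mathbf{C}_F(\mathbf{K},\mathbf{P}_{AB})$ for all $\mathbf{P}_{AB}\in\mathcal{A}_{\mathrm{Split}}$. For $\omega\in[0,1]$, $\bar\omega=1-\omega$: $\mathbf{B}_{\mathrm{SCI}}(\omega)^{-1}=\omega(\mathbf{P}_A+\omega\mathbf{Q}_A)^{-1}+\bar\omega(\mathbf{P}_B+\bar\omega\mathbf{Q}_B)^{-1}$. $J$ increasing means: $\mathbf{P}\preceq\mathbf{Q}\Rightarrow J(\mathbf{P})\le J(\mathbf{Q})$, and $\mathbf{P}\preceq\mathbf{Q}$,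 $\mathbf{P}\ne\mathbf{Q}\Rightarrow J(\mathbf{P})<J(\mathbf{Q})$ (Loewner order). *)

(* Defs.v *)
From HB Require Import structures.
From mathcomp Require Import all_boot all_order all_algebra.
From mathcomp Require Import reals.
Set Implicit Arguments. Unset Strict Implicit. Unset Printing Implicit Defensive.
Import Order.TTheory GRing.Theory Num.Theory.
Local Open Scope ring_scope.

Section Defs.
Variable R : realType.

Definition symmx m (A : 'M[R]_m) : Prop := A^T = A.

Definition psdmx m (A : 'M[R]_m) : Prop :=
  symmx A /\ forall x : 'cV[R]_m, 0 <= (x^T *m A *m x) 0 0.

Definition pdmx m (A : 'M[R]_m) : Prop :=
  symmx A /\ forall x : 'cV[R]_m, x != 0 -> 0 < (x^T *m A *m x) 0 0.

Definition loewner_le m (P Q : 'M[R]_m) : Prop := psdmx (Q - P).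

Definition increasing_cost m (J : 'M[R]_m -> R) : Prop :=
  (forall P Q, symmx P -> symmx Q -> loewner_le P Q -> J P <= J Q) /\
  (forall P Q, symmx P -> symmx Q -> loewner_le P Q -> P <> Q -> J P < J Q).

(* A_Split: admissible cross-covariances *)
Definition A_Split m (PA PB M : 'M[R]_m) : Prop :=
  psdmx (block_mx PA M M^T PB).

Definition C_F m (CA CB KA KB PAB : 'M[R]_m) : 'M[R]_m :=
  KA *m CA *m KA^T + KA *m PAB *m KB^T + KB *m PAB^T *m KA^T + KB *m CB *m KB^T.

Definition conservative_fusion m (PA PB QA QB KA KB BF : 'M[R]_m) : Prop :=
  symmx BF /\ KA + KB = 1%:M /\
  forall PAB, A_Split PA PB PAB ->
    loewner_le (C_F (PA + QA) (PB + QB) KA KB PAB) BF.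

Definition B_SCI m (PA PB QA QB : 'M[R]_m) (w : R) : 'M[R]_m :=
  invmx (w *: invmx (PA + w *: QA) + (1 - w) *: invmx (PB + (1 - w) *: QB)).

End Defs.

(* Main.v *)
Require Import Defs.
From HB Require Import structures.
From mathcomp Require Import all_boot all_order all_algebra.
From mathcomp Require Import reals.
From mathcomp Require Import classical_sets boolp.
From mathcomp Require Import ring lra.
Import Order.TTheory GRing.Theory Num.Theory.
Local Open Scope ring_scope.
Set Implicit Arguments. Unset Strict Implicit. Unset Printing Implicit Defensive.


Section QF.
Variable R : realType.
Variable m : nat.
Implicit Types (M N : 'M[R]_m) (x y u v : 'cV[R]_m).

Definition bf M x y : R := (x^T *m M *m y) 0 0.
Definition qf M x : R := bf M x x.

Lemma bfDm M N x y : bf (M + N) x y = bf M x y + bf N x y.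
Proof. by rewrite /bf mulmxDr mulmxDl mxE. Qed.
Lemma bfNm M x y : bf (- M) x y = - bf M x y.
Proof. by rewrite /bf mulmxN mulNmx mxE. Qed.
Lemma bfBm M N x y : bf (M - N) x y = bf M x y - bf N x y.
Proof. by rewrite bfDm bfNm. Qed.
Lemma bfZm a M x y : bf (a *: M) x y = a * bf M x y.
Proof. by rewrite /bf -scalemxAr -scalemxAl mxE. Qed.
Lemma bfDl M x y u : bf M (x + y) u = bf M x u + bf M y u.
Proof. by rewrite /bf linearD /= !mulmxDl mxE. Qed.
Lemma bfDr M x y u : bf M u (x + y) = bf M u x + bf M u y.
Proof. by rewrite /bf !mulmxDr mxE. Qed.
Lemma bfZl a M x y : bf M (a *: x) y = a * bf M x y.
Proof. by rewrite /bf linearZ /= -!scalemxAl mxE. Qed.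
Lemma bfZr a M x y : bf M x (a *: y) = a * bf M x y.
Proof. by rewrite /bf -!scalemxAr mxE. Qed.
Lemma bfNl M x y : bf M (- x) y = - bf M x y.
Proof. by rewrite -scaleN1r bfZl mulN1r. Qed.
Lemma bfNr M x y : bf M x (- y) = - bf M x y.
Proof. by rewrite -scaleN1r bfZr mulN1r. Qed.
Lemma bf_tr M x y : bf M^T x y = bf M y x.
Proof.
rewrite /bf (_ : (x^T *m M^T *m y) 0 0 = ((x^T *m M^T *m y)^T) 0 0); last by rewrite [RHS]mxE.
by rewrite !trmx_mul !trmxK mulmxA.
Qed.
Lemma bf_sym M x y : M^T = M -> bf M x y = bf M y x.
Proof. by move=> HM; rewrite -{1}HM bf_tr. Qed.
Lemma qf_expand M x y a :
  qf M (x + a *: y) = qf M x + a * (bf M x y + bf M y x) + a ^+ 2 * qf M y.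
Proof. rewrite /qf !(bfDl, bfDr, bfZl, bfZr); ring. Qed.
Lemma qfN M x : qf M (- x) = qf M x.
Proof. by rewrite /qf bfNl bfNr opprK. Qed.
Lemma qfZ M a x : qf M (a *: x) = a ^+ 2 * qf M x.
Proof. rewrite /qf bfZl bfZr; ring. Qed.

End QF.

Lemma bf_mul (R : realType) m p (K L : 'M[R]_(m,p)) (M : 'M[R]_p) (x y : 'cV[R]_m) :
  bf (K *m M *m L^T) x y = bf M (K^T *m x) (L^T *m y).
Proof. by rewrite /bf trmx_mul trmxK !mulmxA. Qed.


Section Core.
Variable R : realType.
Variable m : nat.
Variables D A B : 'M[R]_m.
Hypothesis A_ge0 : forall x, 0 <= qf A x.
Hypothesis B_ge0 : forall x, 0 <= qf B x.
Hypothesis D_ge0 : forall x, 0 <= qf D x.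
Hypothesis DAB : forall x, 4 * qf A x * qf B x <= qf D x ^+ 2.
Hypothesis H3 : forall x, qf A x = 0 -> qf D x = 0 -> qf B x = 0.

Definition Qs (s : R) := s ^+ 2 *: A - s *: D + B.
Definition Hs (s : R) := (2 * s) *: A - D.

Lemma qfQs s x : qf (Qs s) x = s ^+ 2 * qf A x - s * qf D x + qf B x.
Proof. by rewrite /qf /Qs bfDm bfBm !bfZm. Qed.
Lemma qfHs s x : qf (Hs s) x = 2 * s * qf A x - qf D x.
Proof. by rewrite /qf /Hs bfBm !bfZm. Qed.

Lemma L1 s x : 0 < s -> 0 < qf (Qs s) x -> qf (Hs s) x = 0 -> False.
Proof.
rewrite qfQs qfHs => s0 q0 /eqP; rewrite subr_eq0 => /eqP h0.
have a0 := A_ge0 x; have b0 := B_ge0 x; have := DAB x.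
have [az|ap] := eqVneq (qf A x) 0.
  have dz : qf D x = 0 by rewrite -h0 az mulr0.
  by move: q0; rewrite az dz (H3 az dz); lra.
have ap' : 0 < qf A x by rewrite lt_def ap a0.
move: q0; rewrite -h0 => q0 h.
have : 0 < 4 * qf A x * (s ^+ 2 * qf A x - s * (2 * s * qf A x) + qf B x).
  by apply: mulr_gt0 => //; lra.
nra.
Qed.

Lemma quad_root (a b c : R) : a < 0 -> 0 < c ->
  exists2 l, 0 < l & a + b * l + c * l ^+ 2 = 0.
Proof.
move=> a0 c0.
have dpos : 0 <= b ^+ 2 - 4 * a * c by nra.
set d := Num.sqrt (b ^+ 2 - 4 * a * c).
have dd : d ^+ 2 = b ^+ 2 - 4 * a * c by rewrite sqr_sqrtr.
have d0 : 0 <= d by apply: sqrtr_ge0.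
have c2 : 2 * c != 0 by rewrite mulf_neq0 // ?gt_eqF //; lra.
exists ((d - b) / (2 * c)).
  apply: divr_gt0; last lra.
  have : b ^+ 2 < d ^+ 2 by rewrite dd; nra.
  nra.
set l := (d - b) / (2 * c).
have hl : 2 * c * l = d - b by rewrite /l mulrC divfK.
have h4 : (4 * c) * (a + b * l + c * l ^+ 2) = 0.
  have -> : (4 * c) * (a + b * l + c * l ^+ 2) =
     4 * a * c + 2 * b * (2 * c * l) + (2 * c * l) ^+ 2 by ring.
  rewrite hl.
  have -> : 4 * a * c + 2 * b * (d - b) + (d - b) ^+ 2 = d ^+ 2 - (b ^+ 2 - 4 * a * c) by ring.
  by rewrite dd subrr.
move/eqP: h4; rewrite mulf_eq0 => /orP[|/eqP //].
by rewrite mulf_eq0 gt_eqF //= gt_eqF //; lra.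
Qed.

Lemma L2 s x y : 0 < s -> 0 < qf (Qs s) x -> qf (Hs s) x < 0 ->
  0 < qf (Qs s) y -> 0 < qf (Hs s) y -> False.
Proof.
move=> s0 qx hx.
wlog cq : y / 0 <= bf (Qs s) x y + bf (Qs s) y x.
  move=> W qy hy; have [c0|c0] := lerP 0 (bf (Qs s) x y + bf (Qs s) y x).
    exact: (W y).
  apply: (W (- y)); rewrite ?qfN //.
  by rewrite bfNl bfNr; lra.
move=> qy hy.
have [l l0 hl] := quad_root (bf (Hs s) x y + bf (Hs s) y x) hx hy.
apply: (@L1 s (x + l *: y)) => //.
  rewrite qf_expand; have : 0 <= l * (bf (Qs s) x y + bf (Qs s) y x) by nra.
  have : 0 <= l ^+ 2 * qf (Qs s) y by nra.
  lra.
by rewrite qf_expand -hl; ring.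
Qed.

Lemma small_delta (q k c s0 : R) : 0 < q -> 0 < k -> 0 <= c -> 0 < s0 ->
  exists d, [/\ 0 < d, d * k < q, c * d < k & d < s0].
Proof.
move=> q0 k0 c0 s00.
have k2 : 2 * k != 0 by rewrite gt_eqF //; lra.
have c2 : 2 * (c + 1) != 0 by rewrite gt_eqF //; lra.
set d1 := q / (2 * k); set d2 := k / (2 * (c + 1)); set d3 := s0 / 2.
have d1p : 0 < d1 by apply: divr_gt0 => //; lra.
have d2p : 0 < d2 by apply: divr_gt0 => //; lra.
have e1 : d1 * (2 * k) = q by rewrite /d1 divfK.
have e2 : d2 * (2 * (c + 1)) = k by rewrite /d2 divfK.
exists (Num.min (Num.min d1 d2) d3); split.
- by rewrite !lt_min d1p d2p /d3; lra.
- have : Num.min (Num.min d1 d2) d3 <= d1 by rewrite !ge_min lexx.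
  move: (Num.min _ _) => d hd.
  have : d * k <= d1 * k by rewrite ler_pM2r.
  lra.
- have : Num.min (Num.min d1 d2) d3 <= d2 by rewrite !ge_min lexx orbT.
  have : 0 < Num.min (Num.min d1 d2) d3 by rewrite !lt_min d1p d2p /d3; lra.
  move: (Num.min _ _) => d dp hd.
  have : c * d <= c * d2 by rewrite ler_wpM2l.
  nra.
- have : Num.min (Num.min d1 d2) d3 <= d3 by rewrite ge_min lexx orbT.
  rewrite /d3; lra.
Qed.

Definition TS s := 0 < s /\ exists x, 0 < qf (Qs s) x /\ qf (Hs s) x < 0.
Definition TB s := 0 < s /\ exists x, 0 < qf (Qs s) x /\ 0 < qf (Hs s) x.

Lemma TS_down s s' : TS s -> 0 < s' -> s' <= s -> TS s'.
Proof.
move=> [s0 [x]]; rewrite !qfQs !qfHs => -[q h] s'0 ss; split => //; exists x.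
rewrite !qfQs !qfHs; have a0 := A_ge0 x; split; last by nra.
have e : (s' + s) * qf A x - qf D x < 0.
  have : s' * qf A x <= s * qf A x by rewrite ler_wpM2r.
  lra.
have : 0 <= (s - s') * (- ((s' + s) * qf A x - qf D x)).
  apply: mulr_ge0; lra.
have -> : s' ^+ 2 * qf A x - s' * qf D x + qf B x =
  s ^+ 2 * qf A x - s * qf D x + qf B x + (s - s') * (- ((s' + s) * qf A x - qf D x)) by ring.
lra.
Qed.

Lemma TS_open s : TS s -> exists2 d, 0 < d & TS (s + d).
Proof.
move=> [s0 [x]]; rewrite !qfQs !qfHs => -[q h].
have a0 := A_ge0 x.
have [d [d0 dk dc _]] := @small_delta (s ^+ 2 * qf A x - s * qf D x + qf B x) (- (2 * s * qf A x - qf D x)) (2 * qf A x) 1 q ltac:(lra) ltac:(lra) ltr01.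
exists d => //; split; first lra.
exists x; rewrite !qfQs !qfHs; split; nra.
Qed.

Lemma TB_open s : TB s -> exists2 d, 0 < d & d < s /\ TB (s - d).
Proof.
move=> [s0 [x]]; rewrite !qfQs !qfHs => -[q h].
have a0 := A_ge0 x.
have [d [d0 dk dc ds]] := @small_delta (s ^+ 2 * qf A x - s * qf D x + qf B x) (2 * s * qf A x - qf D x) (2 * qf A x) s q h ltac:(lra) s0.
exists d => //; split => //; split; first lra.
exists x; rewrite !qfQs !qfHs; split; nra.
Qed.

Lemma TSTB s : TS s -> TB s -> False.
Proof. by move=> [s0 [x [qx hx]]] [_ [y [qy hy]]]; exact: (@L2 s x y). Qed.

Lemma good s : 0 < s -> ~ TS s -> ~ TB s -> forall x, qf (Qs s) x <= 0.
Proof.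
move=> s0 nTS nTB x; rewrite leNgt; apply/negP => qx.
have [h|h|h] := ltgtP (qf (Hs s) x) 0.
- by apply: nTS; split => //; exists x.
- by apply: nTB; split => //; exists x.
- exact: (@L1 s x).
Qed.

Variable z0 : 'cV[R]_m.
Hypothesis az0 : 0 < qf A z0.
Hypothesis bz0 : 0 < qf B z0.

Lemma core : exists2 s, 0 < s & forall x, s ^+ 2 * qf A x - s * qf D x + qf B x <= 0.
Proof.
set a := qf A z0; set b := qf B z0; set f := qf D z0.
have az : 0 < a by []. have bz : 0 < b by [].
have f0 : 0 < f.
  have := DAB z0; have := D_ge0 z0; rewrite -/a -/b -/f => h1 h2.
  have ab : 0 < 4 * a * b by rewrite mulr_gt0 ?mulr_gt0.
  rewrite lt_def h1 andbT; apply/eqP => fz; move: h2; rewrite fz expr0n /=; lra.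
set slo := b * f / (f ^+ 2 + 2 * a * b).
have den : 0 < f ^+ 2 + 2 * a * b.
  have : 0 < f ^+ 2 by rewrite exprn_gt0.
  have : 0 < 2 * a * b by rewrite mulr_gt0 ?mulr_gt0.
  lra.
have slo0 : 0 < slo by rewrite /slo; apply: divr_gt0 => //; rewrite mulr_gt0.
have eslo : slo * (f ^+ 2 + 2 * a * b) = b * f by rewrite /slo divfK ?gt_eqF.
have TSlo : TS slo.
  split => //; exists z0; rewrite qfQs qfHs -/a -/b -/f; split.
  - have e1 : slo * f * f = b * f - 2 * a * b * slo.
      by rewrite -eslo; ring.
    have p : 0 < 2 * a * b * slo by have := mulr_gt0 (mulr_gt0 az bz) slo0; lra.
    have : slo * f * f < b * f by lra.
    rewrite ltr_pM2r // => h.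
    have : 0 < slo ^+ 2 * a by rewrite mulr_gt0 ?exprn_gt0.
    lra.
  - have e1 : f * b = slo * f ^+ 2 + 2 * slo * a * b.
      by rewrite mulrC -eslo; ring.
    have p : 0 < slo * f ^+ 2 by apply: mulr_gt0 => //; apply: exprn_gt0.
    have : 2 * slo * a * b < f * b by lra.
    rewrite ltr_pM2r // => h.
    lra.
set shi := (f + 1) / a.
have eshi : shi * a = f + 1 by rewrite /shi divfK ?gt_eqF.
have shi0 : 0 < shi by rewrite /shi; apply: divr_gt0 => //; lra.
have TBhi : TB shi.
  split => //; exists z0; rewrite qfQs qfHs -/a -/b -/f; split; nra.
have ub : forall s, TS s -> s < shi.
  move=> s Ts; rewrite ltNge; apply/negP => hs.
  apply: (@TSTB shi) => //; apply: (TS_down Ts) => //.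
have hs : has_sup TS.
  split; first by exists slo.
  by exists shi => s Ts; apply/ltW/ub.
set s0 := sup TS.
have les0 : slo <= s0 by apply: sup_upper_bound.
have s0p : 0 < s0 by lra.
exists s0 => // x.
rewrite -qfQs; apply: good => //.
- move=> Ts0; have [d d0 Tsd] := TS_open Ts0.
  have := sup_upper_bound hs Tsd; rewrite -/s0; lra.
- move=> Tb0; have [d d0 [ds Tbd]] := TB_open Tb0.
  have [r Tr hr] := sup_adherent d0 hs.
  apply: (@TSTB (s0 - d)) => //; apply: (TS_down Tr); move: hr; rewrite -/s0 => hr; lra.
Qed.

End Core.


Section Mat.
Variable R : realType.
Variable m : nat.
Implicit Types (M N : 'M[R]_m) (x y u v : 'cV[R]_m).

Lemma qf_ge0_nonneg M : (forall x, 0 <= qf M x) -> forall x,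
  qf M x = 0 -> forall y, bf M x y + bf M y x = 0.
Proof.
move=> H x qx y; set c := bf M x y + bf M y x.
have := H (x + (- c / (qf M y + 1)) *: y); rewrite qf_expand qx -/c.
have hy := H y; set l := - c / (qf M y + 1).
have el : l * (qf M y + 1) = - c by rewrite /l divfK // gt_eqF //; lra.
move=> h.
have : 0 <= (qf M y + 1) ^+ 2 * (l * c + l ^+ 2 * qf M y).
  by apply: mulr_ge0; [exact: sqr_ge0 | lra].
have -> : (qf M y + 1) ^+ 2 * (l * c + l ^+ 2 * qf M y) =
   (l * (qf M y + 1)) * c * (qf M y + 1) + (l * (qf M y + 1)) ^+ 2 * qf M y by ring.
rewrite el.
have -> : - c * c * (qf M y + 1) + (- c) ^+ 2 * qf M y = - c ^+ 2 by ring.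
have : 0 <= c ^+ 2 := sqr_ge0 c.
move=> c2 h2; apply/eqP; rewrite -sqrf_eq0; apply/eqP; lra.
Qed.

Lemma CS M u a : (forall x, 0 <= qf M x) -> M^T = M ->
  bf M u a ^+ 2 <= qf M u * qf M a.
Proof.
move=> H S.
have [z|nz] := eqVneq (qf M a) 0.
  have := qf_ge0_nonneg H z u; rewrite (bf_sym _ _ S) => h.
  have -> : bf M u a = 0 by lra.
  by rewrite z expr0n mulr0.
have pa : 0 < qf M a by rewrite lt_def nz H.
have := H (u + (- bf M u a / qf M a) *: a); rewrite qf_expand (bf_sym a u S).
set l := - bf M u a / qf M a.
have el : l * qf M a = - bf M u a by rewrite /l divfK.
have -> : qf M u + l * (bf M u a + bf M u a) + l ^+ 2 * qf M a =
   qf M u - bf M u a ^+ 2 / qf M a.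
  by rewrite /l; field; rewrite gt_eqF.
rewrite subr_ge0 ler_pdivrMr //.
Qed.

Lemma mx_eq0 M : (forall x, M *m x = 0) -> M = 0.
Proof.
move=> H; apply/matrixP => i j.
have := congr1 (fun N : 'cV_m => N i 0) (H (delta_mx j 0)).
by rewrite -colE !mxE.
Qed.

Lemma pd_unit M : pdmx M -> M \in unitmx.
Proof.
move=> [S P]; rewrite unitmxE unitfE; apply/negP => /det0P [v v0 vM].
have : v^T != 0 by rewrite trmx_eq0.
move=> /P; rewrite trmxK vM mul0mx mxE; lra.
Qed.

Lemma sym_inv M : symmx M -> symmx (invmx M).
Proof. by rewrite /symmx trmx_inv => ->. Qed.

Lemma qf_inv M y : M \in unitmx -> symmx M ->
  qf (invmx M) y = qf M (invmx M *m y).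
Proof.
move=> uM S; rewrite /qf /bf trmx_mul (sym_inv S) !mulmxA.
by rewrite mulmxKV //. Qed.

Lemma bf_inv M a y : M \in unitmx -> bf M a (invmx M *m y) = (a^T *m y) 0 0.
Proof. by move=> uM; rewrite /bf mulmxA mulmxK. Qed.

Lemma pd_inv M : pdmx M -> pdmx (invmx M).
Proof.
move=> [S P]; split; first exact: sym_inv.
move=> x x0; have uM := pd_unit (conj S P).
have := qf_inv x uM S; rewrite /qf /bf => ->; apply: P.
apply: contra x0 => /eqP h; apply/eqP.
by rewrite -(mulKVmx uM x) h mulmx0.
Qed.

Lemma psd_of_pd M : pdmx M -> forall x, 0 <= qf M x.
Proof.
move=> [_ P] x; have [->|x0] := eqVneq x 0; last exact/ltW/P.
by rewrite /qf /bf mulmx0 mxE.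
Qed.

End Mat.


Lemma pd_add_psd (R : realType) m (P Q : 'M[R]_m) c : pdmx P -> pdmx Q -> 0 <= c ->
  pdmx (P + c *: Q).
Proof.
move=> [SP HP] [SQ HQ] c0; split.
  by rewrite /symmx linearD linearZ /= SP SQ.
move=> x x0; have := HP x x0; have := psd_of_pd (conj SQ HQ) x.
rewrite /qf => h1 h2.
have -> : (x^T *m (P + c *: Q) *m x) 0 0 = bf P x x + c * bf Q x x.
  by rewrite -/(bf _ x x) bfDm bfZm.
rewrite /bf; have : 0 <= c * bf Q x x by apply: mulr_ge0.
rewrite /bf; lra.
Qed.

Section SCI.
Variable R : realType.
Variable m : nat.
Variables PA PB QA QB : 'M[R]_m.
Hypotheses (pA : pdmx PA) (pB : pdmx PB) (qA : pdmx QA) (qB : pdmx QB).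
Variable w : R.
Hypothesis w0 : 0 <= w.
Hypothesis w1 : w <= 1.

Let X := PA + w *: QA.
Let Y := PB + (1 - w) *: QB.
Let S := w *: invmx X + (1 - w) *: invmx Y.

Lemma pdX : pdmx X. Proof. exact: pd_add_psd. Qed.
Lemma pdY : pdmx Y. Proof. by apply: pd_add_psd => //; rewrite subr_ge0. Qed.
Lemma w0' : 0 <= w. Proof. by []. Qed.
Lemma w1' : w <= 1. Proof. by []. Qed.
Lemma uX : X \in unitmx. Proof. exact/pd_unit/pdX. Qed.
Lemma uY : Y \in unitmx. Proof. exact/pd_unit/pdY. Qed.

Lemma pdS : pdmx S.
Proof.
have [SX HX] := pd_inv pdX; have [SY HY] := pd_inv pdY.
split; first by rewrite /symmx /S linearD !linearZ /= SX SY.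
move=> x x0; have h2 : 0 < qf (invmx X) x := HX x x0.
have h1 : 0 < qf (invmx Y) x := HY x x0.
have W0 := w0'; have W1 := w1'.
change (0 < qf S x); move: h1 h2; rewrite /qf /S bfDm !bfZm => h1 h2.
have [->|wp] := eqVneq w 0; first by rewrite mul0r add0r subr0 mul1r.
have wp' : 0 < w by rewrite lt_def wp w0.
have : 0 <= (1 - w) * bf (invmx Y) x x by apply: mulr_ge0; lra.
have : 0 < w * bf (invmx X) x x by apply: mulr_gt0.
lra.
Qed.

Lemma uS : S \in unitmx. Proof. exact/pd_unit/pdS. Qed.

Lemma BS_def : B_SCI PA PB QA QB w = invmx S. Proof. by []. Qed.

Lemma pdB : pdmx (B_SCI PA PB QA QB w).
Proof. exact/pd_inv/pdS. Qed.

Lemma symB : symmx (B_SCI PA PB QA QB w).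
Proof. by case: pdB. Qed.

Lemma symS : symmx S. Proof. by case: pdS. Qed.

Lemma qfB x : qf (B_SCI PA PB QA QB w) x =
  w * qf (invmx X) (invmx S *m x) + (1 - w) * qf (invmx Y) (invmx S *m x).
Proof. by rewrite BS_def (qf_inv _ uS symS) {1}/S /qf bfDm !bfZm. Qed.

Lemma BLUE x a b : a + b = x ->
  w * (1 - w) * qf (B_SCI PA PB QA QB w) x <= (1 - w) * qf X a + w * qf Y b.
Proof.
move=> ab; set y := invmx S *m x.
have W0 := w0'; have W1 := w1'.
have [SX _] := pdX; have [SY _] := pdY.
have hX := psd_of_pd pdX (a + (- w) *: (invmx X *m y)).
have hY := psd_of_pd pdY (b + (- (1 - w)) *: (invmx Y *m y)).
rewrite qf_expand (bf_sym (invmx X *m y) a SX) bf_inv ?uX // -(qf_inv y uX SX) in hX.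
rewrite qf_expand (bf_sym (invmx Y *m y) b SY) bf_inv ?uY // -(qf_inv y uY SY) in hY.
have e1 : (a^T *m y) 0 0 + (b^T *m y) 0 0 = qf (B_SCI PA PB QA QB w) x.
  have -> : (a^T *m y) 0 0 + (b^T *m y) 0 0 = ((a + b)^T *m y) 0 0.
    by rewrite linearD /= mulmxDl [RHS]mxE.
  by rewrite ab BS_def /qf /bf /y !mulmxA.
have e2 := qfB x; rewrite -/y in e2.
set qa := (a^T *m y) 0 0 in hX e1; set qb := (b^T *m y) 0 0 in hY e1.
set Q := qf (B_SCI _ _ _ _ _) x in e1 e2 *.
set qx := qf (invmx X) y in hX e2; set qy := qf (invmx Y) y in hY e2.
have W1'' : 0 <= 1 - w by rewrite subr_ge0.
have H := addr_ge0 (mulr_ge0 W1'' hX) (mulr_ge0 W0 hY).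
have E : (1 - w) * (qf X a + - w * (qa + qa) + (- w) ^+ 2 * qx) +
   w * (qf Y b + - (1 - w) * (qb + qb) + (- (1 - w)) ^+ 2 * qy) =
   (1 - w) * qf X a + w * qf Y b - 2 * (w * (1 - w)) * (qa + qb) + w * (1 - w) * (w * qx + (1 - w) * qy).
  by ring.
rewrite e1 -e2 in E.
lra.
Qed.

End SCI.


Lemma bf_block (R : realType) m (A1 A2 A3 A4 : 'M[R]_m) (x1 x2 y1 y2 : 'cV[R]_m) :
  bf (block_mx A1 A2 A3 A4) (col_mx x1 x2) (col_mx y1 y2) =
  bf A1 x1 y1 + bf A2 x1 y2 + bf A3 x2 y1 + bf A4 x2 y2.
Proof.
rewrite /bf tr_col_mx mul_row_block mul_row_col !mulmxDl !mxE.
ring.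
Qed.

Lemma qf_CF (R : realType) m (CA CB KA KB PAB : 'M[R]_m) x :
  qf (C_F CA CB KA KB PAB) x = qf CA (KA^T *m x) + bf PAB (KA^T *m x) (KB^T *m x)
    + bf PAB^T (KB^T *m x) (KA^T *m x) + qf CB (KB^T *m x).
Proof. by rewrite /qf /C_F !bfDm !bf_mul. Qed.

Lemma CF_sym (R : realType) m (CA CB KA KB PAB : 'M[R]_m) :
  symmx CA -> symmx CB -> symmx (C_F CA CB KA KB PAB).
Proof.
rewrite /symmx /C_F => SA SB.
rewrite !linearD /= !trmx_mul !trmxK SA SB !mulmxA.
rewrite -!addrA; congr (_ + _); rewrite !addrA; congr (_ + _).
by rewrite addrC.
Qed.

Lemma psd_sym (R : realType) m (M : 'M[R]_m) : psdmx M -> symmx M.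
Proof. by case. Qed.

Lemma block_sym (R : realType) m (PA PB M : 'M[R]_m) :
  symmx PA -> symmx PB -> symmx (block_mx PA M M^T PB).
Proof. by rewrite /symmx tr_block_mx trmxK => -> ->. Qed.

Lemma part1 (R : realType) m (PA PB QA QB : 'M[R]_m) w :
  pdmx PA -> pdmx PB -> pdmx QA -> pdmx QB -> 0 <= w -> w <= 1 ->
  conservative_fusion PA PB QA QB
    (w *: (B_SCI PA PB QA QB w *m invmx (PA + w *: QA)))
    ((1 - w) *: (B_SCI PA PB QA QB w *m invmx (PB + (1 - w) *: QB)))
    (B_SCI PA PB QA QB w).
Proof.
move=> pA pB qA qB w0 w1.
have uS := uS pA pB qA qB w0 w1.
have uX := uX pA qA w0. have uY := uY pB qB w1.
have [SX _] := pdX pA qA w0. have [SY _] := pdY pB qB w1.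
have SB := symB pA pB qA qB w0 w1.
have [sPA _] := pA; have [sPB _] := pB; have [sQA _] := qA; have [sQB _] := qB.
have sCA : symmx (PA + QA) by rewrite /symmx linearD /= sPA sQA.
have sCB : symmx (PB + QB) by rewrite /symmx linearD /= sPB sQB.
split => //; split.
  by rewrite !scalemxAr -mulmxDr BS_def mulVmx.
move=> PAB Hs; split.
  by rewrite /symmx linearB /= SB (CF_sym _ _ _ sCA sCB).
move=> x; change (0 <= qf (B_SCI PA PB QA QB w - C_F (PA + QA) (PB + QB)
    (w *: (B_SCI PA PB QA QB w *m invmx (PA + w *: QA)))
    ((1 - w) *: (B_SCI PA PB QA QB w *m invmx (PB + (1 - w) *: QB))) PAB) x).
rewrite /qf bfBm -/(qf _ x) -/(qf _ x) qf_CF.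
set y := B_SCI PA PB QA QB w *m x.
set p := invmx (PA + w *: QA) *m y.
set q := invmx (PB + (1 - w) *: QB) *m y.
have ea : (w *: (B_SCI PA PB QA QB w *m invmx (PA + w *: QA)))^T *m x = w *: p.
  by rewrite linearZ /= trmx_mul (sym_inv SX) SB -scalemxAl -mulmxA.
have eb : ((1 - w) *: (B_SCI PA PB QA QB w *m invmx (PB + (1 - w) *: QB)))^T *m x = (1 - w) *: q.
  by rewrite linearZ /= trmx_mul (sym_inv SY) SB -scalemxAl -mulmxA.
rewrite ea eb qfB // -/y.
rewrite (qf_inv _ uX SX) (qf_inv _ uY SY) -/p -/q.
have hb : 0 <= qf (block_mx PA PAB PAB^T PB) (col_mx p (- q)) := proj2 Hs (col_mx p (- q)).
rewrite /qf bf_block !(bfNl, bfNr) in hb.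
rewrite !qfZ /qf !bfZl !bfZr !bfDm !bfZm.
idtac.
set a1 := bf PA p p in hb *; set a2 := bf PAB p q in hb *; set a3 := bf PAB^T q p in hb *.
set a4 := bf PB q q in hb *.
set e := (X in 0 <= X).
have -> : e = w * (1 - w) * (a1 - a2 - a3 + a4).
  by rewrite /e; ring.
apply: mulr_ge0; last by lra.
by apply: mulr_ge0; rewrite ?subr_ge0.
Qed.


Lemma H3_of (R : realType) m (D A B : 'M[R]_m) z :
  (forall x, 0 <= qf A x) -> (forall x, 0 <= qf B x) -> (forall x, 0 <= qf D x) ->
  (forall x, 4 * qf A x * qf B x <= qf D x ^+ 2) -> 0 < qf A z ->
  forall x, qf A x = 0 -> qf D x = 0 -> qf B x = 0.
Proof.
move=> HA HB HD DAB az x ax dx.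
have cA := qf_ge0_nonneg HA ax z; have cD := qf_ge0_nonneg HD dx z.
apply/eqP; rewrite eq_le HB andbT; rewrite leNgt; apply/negP => bx.
set cB := bf B x z + bf B z x.
set al := qf A z; set fy := qf D z; set b := qf B x; set by' := qf B z.
have az' : 0 < al by []. have bx' : 0 < b by [].
have aby : 0 < al * b by apply: mulr_gt0.
have den : 0 < al * b + fy ^+ 2 + 1 by have := sqr_ge0 fy; lra.
set e := al * b / (al * b + fy ^+ 2 + 1).
have e0 : 0 < e by apply: divr_gt0.
have ee : e * (al * b + fy ^+ 2 + 1) = al * b by rewrite /e divfK // gt_eqF.
have e1 : e < 1.
  have : e * (al * b + fy ^+ 2 + 1) < 1 * (al * b + fy ^+ 2 + 1).
    by rewrite ee mul1r; have := sqr_ge0 fy; lra.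
  by rewrite ltr_pM2r.
have [l [l2 lc]] : exists l, l ^+ 2 = e ^+ 2 /\ 0 <= l * cB.
  have [c0|c0] := lerP 0 cB.
    by exists e; split => //; apply: mulr_ge0 => //; lra.
  exists (- e); split; first by rewrite sqrrN.
  by rewrite mulNr -mulrN; apply: mulr_ge0; lra.
have := DAB (x + l *: z); rewrite !qf_expand ax dx cA cD -/cB -/al -/fy -/b -/by'.
rewrite !mulr0 !add0r l2.
have b2 : 0 <= by' := HB z.
have e2 : 0 < e ^+ 2 by apply: exprn_gt0.
move=> h.
have h2 : 4 * al * (b + l * cB + e ^+ 2 * by') * e ^+ 2 <= fy ^+ 2 * e ^+ 2 * e ^+ 2.
  have -> : 4 * al * (b + l * cB + e ^+ 2 * by') * e ^+ 2 = 4 * (e ^+ 2 * al) * (b + l * cB + e ^+ 2 * by') by ring.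
  have -> : fy ^+ 2 * e ^+ 2 * e ^+ 2 = (e ^+ 2 * fy) ^+ 2 by ring.
  exact: h.
rewrite ler_pM2r // in h2.
have h3 : 4 * (al * b) <= e ^+ 2 * fy ^+ 2.
  have : 0 <= al * (l * cB + e ^+ 2 * by').
    apply: mulr_ge0; first lra.
    by apply: addr_ge0 => //; apply: mulr_ge0 => //; lra.
  move: h2; rewrite mulrC => h2 h4.
  have -> : e ^+ 2 * fy ^+ 2 = fy ^+ 2 * e ^+ 2 by ring.
  have : 4 * al * (b + l * cB + e ^+ 2 * by') = 4 * (al * b) + 4 * (al * (l * cB + e ^+ 2 * by')) by ring.
  lra.
have h4 : e ^+ 2 * fy ^+ 2 <= e * fy ^+ 2.
  apply: ler_wpM2r; first exact: sqr_ge0.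
  rewrite expr2 ler_piMr //; lra.
have h5 : e * fy ^+ 2 < al * b.
  have E : e * (al * b + fy ^+ 2 + 1) = e * fy ^+ 2 + e * (al * b + 1) by ring.
  have : 0 < e * (al * b + 1) by apply: mulr_gt0 => //; lra.
  lra.
lra.
Qed.


Lemma bf0m (R : realType) m (x y : 'cV[R]_m) : bf 0 x y = 0.
Proof. by rewrite /bf mulmx0 mul0mx mxE. Qed.

Lemma bf_rank1 (R : realType) m (P Q : 'M[R]_m) (u v x y : 'cV[R]_m) c :
  bf (c *: ((P *m u) *m (Q *m v)^T)) x y = c * (bf P^T u x * bf Q^T v y).
Proof.
rewrite bfZm; congr (_ * _).
rewrite /bf (mulmxA x^T) -(mulmxA (x^T *m (P *m u))) [LHS]mxE big_ord1.
congr (_ * _); last by rewrite trmx_mul.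
rewrite (_ : (x^T *m (P *m u)) 0 0 = ((x^T *m (P *m u))^T) 0 0); last by rewrite [RHS]mxE.
by rewrite !trmx_mul trmxK.
Qed.

Lemma A_split_rank1 (R : realType) m (PA PB : 'M[R]_m) (u v : 'cV[R]_m) c :
  pdmx PA -> pdmx PB -> c ^+ 2 * qf PA u * qf PB v <= 1 ->
  A_Split PA PB (c *: ((PA *m u) *m (PB *m v)^T)).
Proof.
move=> pA pB hc; have [sA _] := pA; have [sB _] := pB.
split; first exact: block_sym.
move=> z; rewrite -(vsubmxK z).
change (0 <= qf (block_mx PA (c *: (PA *m u *m (PB *m v)^T))
   (c *: (PA *m u *m (PB *m v)^T))^T PB) (col_mx (usubmx z) (dsubmx z))).
rewrite /qf bf_block bf_tr bf_rank1 sA sB.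
set z1 := usubmx z; set z2 := dsubmx z.
have hA := psd_of_pd pA; have hB := psd_of_pd pB.
have cs1 := CS z1 u hA sA; have cs2 := CS v z2 hB sB.
rewrite (bf_sym u z1 sA) -/(qf PA z1) -/(qf PB z2).
move: (hA z1) (hB z2) (hA u) (hB v) cs1 cs2 hc.
move: (qf PA z1) (qf PB z2) (qf PA u) (qf PB v) (bf PA z1 u) (bf PB v z2) => U V al be m1 m2.
move=> U0 V0 al0 be0 c1 c2 hc.
have t2 : (c * (m1 * m2)) ^+ 2 <= U * V.
  have -> : (c * (m1 * m2)) ^+ 2 = c ^+ 2 * (m1 ^+ 2 * m2 ^+ 2) by ring.
  have : m1 ^+ 2 * m2 ^+ 2 <= (U * al) * (be * V).
    apply: ler_pM => //; exact: sqr_ge0.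
  move=> h; have c0 : 0 <= c ^+ 2 := sqr_ge0 c.
  have := ler_wpM2l c0 h.
  have -> : c ^+ 2 * (U * al * (be * V)) = (c ^+ 2 * al * be) * (U * V) by ring.
  move=> h'; apply: (le_trans h').
  have UV : 0 <= U * V by apply: mulr_ge0.
  have := ler_wpM2r UV hc; rewrite mul1r; apply.
move: t2; set t := c * (m1 * m2) => t2.
have : 0 <= (U - V) ^+ 2 := sqr_ge0 _.
nra.
Qed.

Lemma qfC0 (R : realType) m (CA CB KA KB : 'M[R]_m) x :
  qf (C_F CA CB KA KB 0) x = qf CA (KA^T *m x) + qf CB (KB^T *m x).
Proof. by rewrite qf_CF trmx0 !bf0m addr0 addr0. Qed.

Lemma qfCr1 (R : realType) m (PA PB CA CB KA KB : 'M[R]_m) x c :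
  symmx PA -> symmx PB ->
  qf (C_F CA CB KA KB (c *: ((PA *m (KA^T *m x)) *m (PB *m (KB^T *m x))^T))) x =
  qf CA (KA^T *m x) + qf CB (KB^T *m x) +
  2 * c * (qf PA (KA^T *m x) * qf PB (KB^T *m x)).
Proof.
move=> sA sB; rewrite qf_CF bf_tr bf_rank1 sA sB /qf; ring.
Qed.

Section Part2.
Variable R : realType.
Variable m : nat.
Variables PA PB QA QB KA KB BF : 'M[R]_m.
Hypotheses (pA : pdmx PA) (pB : pdmx PB) (qA : pdmx QA) (qB : pdmx QB).
Hypothesis cf : conservative_fusion PA PB QA QB KA KB BF.

Let CA := PA + QA.
Let CB := PB + QB.
Let Dm := BF - C_F CA CB KA KB 0.
Let Am := KA *m PA *m KA^T.
Let Bm := KB *m PB *m KB^T.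

Lemma qfAm x : qf Am x = qf PA (KA^T *m x). Proof. by rewrite /qf bf_mul. Qed.
Lemma qfBm x : qf Bm x = qf PB (KB^T *m x). Proof. by rewrite /qf bf_mul. Qed.

Lemma qfDm x : qf Dm x = qf BF x - (qf CA (KA^T *m x) + qf CB (KB^T *m x)).
Proof. by rewrite /Dm {1}/qf bfBm -!/(qf _ x) qfC0. Qed.

Lemma cons_ineq x c : c ^+ 2 * qf PA (KA^T *m x) * qf PB (KB^T *m x) <= 1 ->
  2 * c * (qf Am x * qf Bm x) <= qf Dm x.
Proof.
move=> hc; have [sA _] := pA; have [sB _] := pB.
have [_ [_ H]] := cf.
have := proj2 (H _ (A_split_rank1 pA pB hc)) x.
rewrite -/(bf _ x x) -/(qf _ x) {1}/qf bfBm -!/(qf _ x) qfCr1 //.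
rewrite qfDm qfAm qfBm -/CA -/CB.
lra.
Qed.

Lemma Am_ge0 x : 0 <= qf Am x. Proof. by rewrite qfAm; apply: psd_of_pd. Qed.
Lemma Bm_ge0 x : 0 <= qf Bm x. Proof. by rewrite qfBm; apply: psd_of_pd. Qed.
Lemma Dm_ge0 x : 0 <= qf Dm x.
Proof.
have h : (0:R) ^+ 2 * qf PA (KA^T *m x) * qf PB (KB^T *m x) <= 1.
  by rewrite expr0n /= !mul0r ler01.
by have := cons_ineq h; rewrite mulr0 mul0r.
Qed.

Lemma DAB x : 4 * qf Am x * qf Bm x <= qf Dm x ^+ 2.
Proof.
have a0 := Am_ge0 x; have b0 := Bm_ge0 x; have d0 := Dm_ge0 x.
have [z|nz] := eqVneq (qf Am x * qf Bm x) 0.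
  by rewrite -mulrA z mulr0; apply: sqr_ge0.
have ab : 0 < qf Am x * qf Bm x by rewrite lt_def nz mulr_ge0.
set r := Num.sqrt (qf Am x * qf Bm x).
have r0 : 0 < r by rewrite sqrtr_gt0.
have rr : r ^+ 2 = qf Am x * qf Bm x by rewrite sqr_sqrtr // ltW.
have hc : r^-1 ^+ 2 * qf PA (KA^T *m x) * qf PB (KB^T *m x) <= 1.
  by rewrite -qfAm -qfBm -mulrA -rr exprVn mulVf // expf_neq0 // gt_eqF.
have h := cons_ineq hc.
have e : 2 * r^-1 * (qf Am x * qf Bm x) = 2 * r.
  by rewrite -rr; field; rewrite gt_eqF.
rewrite e in h.
have -> : 4 * qf Am x * qf Bm x = 4 * r ^+ 2 by rewrite rr; ring.
nra.
Qed.

Lemma ex_nz (K : 'M[R]_m) : K != 0 -> exists x : 'cV[R]_m, K^T *m x != 0.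
Proof.
move=> K0; case: (pselect (exists x : 'cV[R]_m, K^T *m x != 0)) => // nex; exfalso.
move/negP: K0; apply; rewrite -trmx_eq0; apply/eqP; apply: mx_eq0 => x.
by apply/eqP/negPn/negP => h; apply: nex; exists x.
Qed.

Lemma A0_0 : A_Split PA PB 0.
Proof.
have h : (0:R) ^+ 2 * qf PA 0 * qf PB 0 <= 1 by rewrite expr0n /= !mul0r ler01.
by have := A_split_rank1 pA pB h; rewrite scale0r.
Qed.

Lemma part2 : exists w, 0 <= w <= 1 /\ loewner_le (B_SCI PA PB QA QB w) BF.
Proof.
have [sBF [KAB H]] := cf.
have [KA0|KAn] := eqVneq KA 0.
  have KB1 : KB = 1%:M by rewrite -KAB KA0 add0r.
  exists 0; split; first by rewrite lexx ler01.
  rewrite /B_SCI !scale0r add0r subr0 !scale1r invmxK.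
  have := H 0 A0_0; rewrite KA0 KB1 /C_F !trmx0 !trmx1 !mul0mx !mulmx1 !mul1mx ?mulmx0.
  by rewrite !add0r.
have [KB0|KBn] := eqVneq KB 0.
  have KA1 : KA = 1%:M by rewrite -KAB KB0 addr0.
  exists 1; split; first by rewrite lexx ler01.
  rewrite /B_SCI subrr !scale0r addr0 !scale1r invmxK.
  have := H 0 A0_0; rewrite KA1 KB0 /C_F !trmx0 !trmx1 !mul0mx !mulmx1 !mul1mx ?mulmx0.
  by rewrite !addr0.
have [xa ha] := ex_nz KAn; have [xb hb1] := ex_nz KBn.
have [sA PAp] := pA; have [sB PBp] := pB.
have axa : 0 < qf Am xa by rewrite qfAm; apply: PAp.
have bxb : 0 < qf Bm xb by rewrite qfBm; apply: PBp.
have [z0 [az bz]] : exists z0, 0 < qf Am z0 /\ 0 < qf Bm z0.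
  case: (ltrP 0 (qf Bm xa)) => [bxa|bxa]; first by exists xa.
  case: (ltrP 0 (qf Am xb)) => [axb|axb]; first by exists xb.
  have bxa0 : qf Bm xa = 0 by apply/eqP; rewrite eq_le bxa Bm_ge0.
  have axb0 : qf Am xb = 0 by apply/eqP; rewrite eq_le axb Am_ge0.
  have c1 := qf_ge0_nonneg Am_ge0 axb0 xa.
  have c2 := qf_ge0_nonneg Bm_ge0 bxa0 xb.
  exists (xa + 1 *: xb); rewrite !qf_expand axb0 bxa0 (addrC (bf Am xa xb)) c1 c2.
  by rewrite !mulr0 !addr0 !add0r expr1n mul1r.
have H3 := H3_of Am_ge0 Bm_ge0 Dm_ge0 DAB az.
have [s s0 hs] := core Am_ge0 Bm_ge0 Dm_ge0 DAB H3 az bz.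
set w := (1 + s)^-1.
have s1 : 0 < 1 + s by lra.
have w0 : 0 < w by rewrite /w invr_gt0.
have ew : w * (1 + s) = 1 by rewrite /w mulVf // gt_eqF.
have w1 : w < 1 by nra.
have ew' : 1 - w = s * w by nra.
exists w; split; first by rewrite (ltW w0) (ltW w1).
have w0' := ltW w0; have w1' := ltW w1.
split.
  by rewrite /symmx linearB /= sBF (symB pA pB qA qB w0' w1').
move=> x; change (0 <= qf (BF - B_SCI PA PB QA QB w) x).
rewrite /qf bfBm -!/(qf _ x).
have ab : KA^T *m x + KB^T *m x = x by rewrite -mulmxDl -linearD /= KAB trmx1 mul1mx.
have hb' := BLUE pA pB qA qB w0' w1' ab.
have hx := hs x.
rewrite qfDm qfAm qfBm /CA /CB in hx.
rewrite /qf !bfDm !bfZm -!/(qf _ _) in hx hb'.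
rewrite ew' in hb'.
move: hx hb'.
set F := qf BF x; set Bq := qf (B_SCI _ _ _ _ _) x.
set al := qf PA _; set be := qf PB _; set qa := qf QA _; set qb := qf QB _.
move=> hx hb0.
have key : s * w * (al + w * qa) + w * (be + s * w * qb) =
  s * w ^+ 2 * F + w ^+ 2 * (s ^+ 2 * al - s * (F - (al + qa + (be + qb))) + be)
  + s * w * al * (1 - w * (1 + s)) + w * be * (1 - w * (1 + s)) by ring.
rewrite ew subrr !mulr0 !addr0 in key.
have w2 : 0 < w ^+ 2 by rewrite exprn_gt0.
have : w ^+ 2 * (s ^+ 2 * al - s * (F - (al + qa + (be + qb))) + be) <= 0.
  by rewrite pmulr_rle0.
move=> h2.
have h3 : (s * w ^+ 2) * Bq <= (s * w ^+ 2) * F.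
  have -> : s * w ^+ 2 * Bq = w * (s * w) * Bq by ring.
  lra.
rewrite ler_pM2l in h3; last by rewrite mulr_gt0.
lra.
Qed.

End Part2.

Unset Implicit Arguments.

Theorem corollary1 (R : realType) (n : nat) (PA PB QA QB : 'M[R]_n.+1)
  (J : 'M[R]_n.+1 -> R) (wstar : R) :
  pdmx PA -> pdmx PB -> pdmx QA -> pdmx QB ->
  increasing_cost J ->
  0 <= wstar <= 1 ->
  (forall w : R, 0 <= w <= 1 ->
     J (B_SCI PA PB QA QB wstar) <= J (B_SCI PA PB QA QB w)) ->
  let Bs := B_SCI PA PB QA QB wstar in
  let KA := wstar *: (Bs *m invmx (PA + wstar *: QA)) in
  let KB := (1 - wstar) *: (Bs *m invmx (PB + (1 - wstar) *: QB)) in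
  conservative_fusion PA PB QA QB KA KB Bs /\
  (forall KA' KB' BF : 'M[R]_n.+1,
     conservative_fusion PA PB QA QB KA' KB' BF -> J Bs <= J BF).
Proof.
move=> pA pB qA qB [Jle _] /andP[w0 w1] Jmin Bs KA KB.
split; first exact: part1.
move=> KA' KB' BF cf.
have [w [/andP[v0 v1] hl]] := part2 pA pB qA qB cf.
apply: (le_trans (Jmin w _)); first by rewrite v0 v1.
apply: Jle => //; first exact: symB.
by case: cf.
Qed.
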